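(* For any $M>1$ there exists $\kappa_0'=\kappa_0'(M)>0$ such that for all $0\le\kappa\le\kappa_0'$ and all integers $1\le m<M$, there exists $\lambda_1>0$ (depending on $\kappa$ and $m$) such that $$1=\frac1{2m}\int_{-1}^1\frac{-\varphi_\kappa'(\bar z)}{1+\lambda_1-\bar z}\,d\bar z.$$ Moreover, for fixed $m$ and $\kappa$ this solution is unique and satisfies $\lambda_1\ge\lambda^*(M)>0$, where $\lambda^*(M)$ depends only on $M$ (not on $\kappa$ or $m$).
   Context: Fix $\Theta\in C^\infty(\mathbb{R})$, $\Theta>0$ on $(-1,1)$, $\operatorname{supp}\Theta\subset(-1,1)$, $\int\Theta=1$. For $\kappa>0$: $\Theta_\kappa(z)=\kappa^{-1}\Theta(z/\kappa)$, $\psi'_\kappa(z)=\int_{-1+\kappa}^{1-\kappa}\Theta_\kappa(z-\bar z)d\bar z$, and $\varphi_\kappa(z)=1-\int_{-1}^z\psi'_\kappa/\int_{-1}^1\psi'_\kappa$ for $z\in[-1,1]$; for $\kappa=0$, $\varphi_0(z)=(1-z)/2$. *)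

(* Defs.v *)
From Stdlib Require Import Reals.
From Coquelicot Require Import Coquelicot.
Open Scope R_scope.

Definition Theta_k (Theta : R -> R) (k z : R) : R := / k * Theta (z / k).

Definition psi'_k (Theta : R -> R) (k z : R) : R :=
  RInt (fun zb => Theta_k Theta k (z - zb)) (-1 + k) (1 - k).

Definition phi_k (Theta : R -> R) (k z : R) : R :=
  if Req_EM_T k 0 then (1 - z) / 2
  else 1 - RInt (psi'_k Theta k) (-1) z / RInt (psi'_k Theta k) (-1) 1.

Definition lambda_eq (Theta : R -> R) (k : R) (m : nat) (l : R) : Prop :=
  1 = / (2 * INR m) *
      RInt (fun zb => - Derive (phi_k Theta k) zb / (1 + l - zb)) (-1) 1.

(* Main.v *)
Require Import Defs.
From Stdlib Require Import Reals Lra FunctionalExtensionality.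
From Coquelicot Require Import Coquelicot.
Open Scope R_scope.

Lemma exd_cont (f : R -> R) x : ex_derive f x -> continuous f x.
Proof. intros H. exact (ex_derive_continuous f x H). Qed.
Lemma exc (f : R -> R) a b : (forall z, Rmin a b <= z <= Rmax a b -> continuous f z) -> ex_RInt f a b.
Proof. intros H. exact (@ex_RInt_continuous R_CompleteNormedModule f a b H). Qed.
Lemma RInt_cst (c a b : R) : @eq R (RInt (fun _ => c) a b) ((b - a) * c).
Proof. rewrite RInt_const. reflexivity. Qed.
Lemma RInt_scal_R (f : R -> R) a b c : ex_RInt f a b ->
  @eq R (RInt (fun x => c * f x) a b) (c * RInt f a b).
Proof. intros H. exact (RInt_scal f a b c H). Qed.
Lemma chasles_R (f : R -> R) a b c : ex_RInt f a b -> ex_RInt f b c ->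
  @eq R (RInt f a c) (RInt f a b + RInt f b c).
Proof. intros H1 H2. symmetry. exact (RInt_Chasles f a b c H1 H2). Qed.
Lemma comp_lin_R (f : R -> R) u v a b : ex_RInt f (u * a + v) (u * b + v) ->
  @eq R (RInt (fun y => u * f (u * y + v)) a b) (RInt f (u * a + v) (u * b + v)).
Proof. intros H. exact (RInt_comp_lin f u v a b H). Qed.

Section K.
Variable Theta : R -> R.
Hypothesis Hsmooth : forall (n : nat) (x : R), ex_derive_n Theta n x.
Hypothesis Hpos : forall z, -1 < z < 1 -> 0 < Theta z.
Hypothesis Hsupp : forall z, Theta z <> 0 -> -1 < z < 1.
Hypothesis Hint : RInt Theta (-1) 1 = 1.
Variable k : R.
Hypothesis Hk : 0 < k <= 1/4.

Lemma Th_cont x : continuous Theta x.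
Proof. apply exd_cont. exact (Hsmooth 1%nat x). Qed.

Lemma Th_nonneg x : 0 <= Theta x.
Proof.
  destruct (Req_dec (Theta x) 0) as [H|H]. lra.
  apply Rlt_le, Hpos, Hsupp, H.
Qed.

Let Tk := Theta_k Theta k.

Lemma Tk_cont x : continuous Tk x.
Proof.
  unfold Tk, Theta_k.
  apply (@continuous_mult R_UniformSpace R_AbsRing (fun _ => / k) (fun x => Theta (x / k))).
  apply continuous_const.
  apply (continuous_comp (fun x => x / k) Theta). apply exd_cont; auto_derive; auto.
  apply Th_cont.
Qed.

Lemma Tk_nonneg x : 0 <= Tk x.
Proof.
  unfold Tk, Theta_k. apply Rmult_le_pos. apply Rlt_le, Rinv_0_lt_compat; lra.
  apply Th_nonneg.
Qed.

Lemma Tk_zero u : k <= Rabs u -> Tk u = 0.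
Proof.
  intros Hu. unfold Tk, Theta_k.
  destruct (Req_dec (Theta (u / k)) 0) as [H|H]. rewrite H; ring.
  apply Hsupp in H. exfalso.
  assert (Rabs (u / k) < 1) by (apply Rabs_def1; lra).
  unfold Rdiv in H0. rewrite Rabs_mult, Rabs_inv, (Rabs_pos_eq k) in H0 by lra.
  apply Rmult_lt_compat_r with (r := k) in H0; [|lra].
  rewrite Rmult_assoc, Rinv_l in H0 by lra. lra.
Qed.

Lemma Tk_ex a b : ex_RInt Tk a b.
Proof. apply exc. intros; apply Tk_cont. Qed.

Let Q (x : R) : R := RInt Tk (-k) x.

Lemma Q_diff a b : @eq R (RInt Tk a b) (Q b - Q a).
Proof. unfold Q. rewrite (chasles_R Tk (-k) a b) by apply Tk_ex. lra. Qed.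

Lemma Q_k : Q k = 1.
Proof.
  unfold Q. rewrite <- Hint.
  assert (E := comp_lin_R Theta (/ k) 0 (-k) k).
  replace (/ k * - k + 0) with (-1) in E by (field; lra).
  replace (/ k * k + 0) with 1 in E by (field; lra).
  rewrite <- E. apply RInt_ext. intros. unfold Tk, Theta_k. f_equal. f_equal. unfold Rdiv. ring.
  apply exc. intros; apply Th_cont.
Qed.

Lemma Q_low x : x <= -k -> Q x = 0.
Proof.
  intros Hx. unfold Q. rewrite (RInt_ext _ (fun _ => 0)). rewrite RInt_cst. lra.
  intros z Hz. rewrite Rmin_right in Hz by lra. rewrite Rmax_left in Hz by lra.
  apply Tk_zero. rewrite Rabs_left; lra.
Qed.

Lemma Q_high x : k <= x -> Q x = 1.
Proof.
  intros Hx. rewrite <- Q_k.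
  assert (RInt Tk k x = 0).
  { rewrite (RInt_ext _ (fun _ => 0)). rewrite RInt_cst. lra.
    intros z Hz. rewrite Rmin_left in Hz by lra. rewrite Rmax_right in Hz by lra.
    apply Tk_zero. rewrite Rabs_right; lra. }
  rewrite Q_diff in H. lra.
Qed.

Lemma Q_mono x y : x <= y -> Q x <= Q y.
Proof.
  intros H. assert (0 <= RInt Tk x y).
  { apply RInt_ge_0; auto. apply Tk_ex. intros; apply Tk_nonneg. }
  rewrite Q_diff in H0. lra.
Qed.

Lemma Q_01 x : 0 <= Q x <= 1.
Proof.
  destruct (Rle_dec x (-k)). rewrite Q_low; lra.
  destruct (Rle_dec k x). rewrite Q_high; lra.
  rewrite <- Q_k. rewrite <- (Q_low (-k)) by lra. split; apply Q_mono; lra.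
Qed.

Lemma Q_cont x : continuous Q x.
Proof.
  apply exd_cont. exists (Tk x). unfold Q.
  apply (is_derive_RInt Tk (fun b => RInt Tk (-k) b) (-k) x).
  apply filter_forall. intros b. exact (@RInt_correct R_CompleteNormedModule Tk (-k) b (Tk_ex _ _)).
  apply Tk_cont.
Qed.

Lemma psi_eq : psi'_k Theta k = fun z => Q (z + 1 - k) - Q (z - 1 + k).
Proof.
  apply functional_extensionality. intros z. unfold psi'_k.
  assert (E := comp_lin_R Tk (-1) z (-1 + k) (1 - k) (Tk_ex _ _)).
  rewrite RInt_scal_R in E.
  2:{ apply exc. intros. apply (continuous_comp (fun y => -1 * y + z) Tk).
      apply exd_cont; auto_derive; auto. apply Tk_cont. }
  rewrite Q_diff in E.
  replace (RInt (fun zb => Theta_k Theta k (z - zb)) (-1 + k) (1 - k))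
    with (RInt (fun y => Tk (-1 * y + z)) (-1 + k) (1 - k)).
  replace (-1 * (-1 + k) + z) with (z + 1 - k) in E by ring.
  replace (-1 * (1 - k) + z) with (z - 1 + k) in E by ring.
  lra.
  apply RInt_ext. intros. unfold Tk. f_equal. ring.
Qed.

Let psi := psi'_k Theta k.

Lemma psi_cont z : continuous psi z.
Proof.
  unfold psi. rewrite psi_eq.
  apply (@continuous_minus R_UniformSpace R_AbsRing R_NormedModule
           (fun z => Q (z + 1 - k)) (fun z => Q (z - 1 + k))).
  apply (continuous_comp (fun z => z + 1 - k) Q). apply exd_cont; auto_derive; auto. apply Q_cont.
  apply (continuous_comp (fun z => z - 1 + k) Q). apply exd_cont; auto_derive; auto. apply Q_cont.
Qed.

Lemma psi_01 z : 0 <= psi z <= 1.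
Proof.
  unfold psi. rewrite psi_eq.
  assert (H1 := Q_01 (z + 1 - k)). assert (H2 := Q_01 (z - 1 + k)).
  assert (Q (z - 1 + k) <= Q (z + 1 - k)) by (apply Q_mono; lra). lra.
Qed.

Lemma psi_1 z : -1 + 2 * k <= z <= 1 - 2 * k -> psi z = 1.
Proof.
  intros Hz. unfold psi. rewrite psi_eq. rewrite Q_high, Q_low; lra.
Qed.

Lemma psi_ex a b : ex_RInt psi a b.
Proof. apply exc. intros; apply psi_cont. Qed.

Let C : R := RInt psi (-1) 1.

Lemma C_bounds : 1 <= C <= 2.
Proof.
  split.
  - unfold C.
    rewrite (chasles_R psi (-1) (-1 + 2 * k) 1) by apply psi_ex.
    rewrite (chasles_R psi (-1 + 2 * k) (1 - 2 * k) 1) by apply psi_ex.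
    assert (0 <= RInt psi (-1) (-1 + 2 * k)).
    { apply RInt_ge_0. lra. apply psi_ex. intros; apply psi_01. }
    assert (0 <= RInt psi (1 - 2 * k) 1).
    { apply RInt_ge_0. lra. apply psi_ex. intros; apply psi_01. }
    assert (@eq R (RInt psi (-1 + 2 * k) (1 - 2 * k)) (2 - 4 * k)).
    { rewrite (RInt_ext _ (fun _ => 1)). rewrite RInt_cst. lra.
      intros z Hz. rewrite Rmin_left in Hz by lra. rewrite Rmax_right in Hz by lra.
      apply psi_1; lra. }
    lra.
  - unfold C. apply Rle_trans with (RInt (fun _ => 1) (-1) 1).
    apply RInt_le. lra. apply psi_ex. apply exc; intros; apply continuous_const.
    intros; apply psi_01.
    rewrite RInt_cst. lra.
Qed.

Lemma phi_deriv z : - Derive (phi_k Theta k) z = psi z / C.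
Proof.
  assert (Hphi : phi_k Theta k = fun z => 1 - RInt psi (-1) z / C).
  { apply functional_extensionality. intros x. unfold phi_k.
    destruct (Req_EM_T k 0). lra. reflexivity. }
  rewrite Hphi.
  assert (HI : is_derive (fun z => RInt psi (-1) z) z (psi z)).
  { apply (is_derive_RInt psi (fun b => RInt psi (-1) b) (-1) z).
    apply filter_forall. intros b. exact (@RInt_correct R_CompleteNormedModule psi (-1) b (psi_ex _ _)).
    apply psi_cont. }
  assert (HC := C_bounds).
  rewrite (is_derive_unique _ z (- (psi z / C))). ring.
  assert (H2 := is_derive_div _ (fun _ => C) z _ 0 HI (is_derive_const C z) ltac:(lra)).
  assert (H3 := is_derive_minus (fun _ => 1) _ z 0 _ (is_derive_const 1 z) H2).
  simpl in H3.
  replace (- (psi z / C)) with (minus 0 ((psi z * C - RInt psi (-1) z * 0) / (C * (C * 1))))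
    by (unfold minus, plus, opp; simpl; field; lra).
  eapply is_derive_ext; [|exact H3]. intros t. simpl. unfold minus, plus, opp; simpl. reflexivity.
Qed.

Lemma g_pos : exists g : R -> R, (forall z, continuous g z) /\
  (forall z, -1 <= z <= 1 -> 0 <= g z <= 1) /\ RInt g (-1) 1 = 1 /\
  (forall z, -1 + 2 * k <= z <= 1 - 2 * k -> 1/2 <= g z) /\
  (forall z, - Derive (phi_k Theta k) z = g z).
Proof.
  assert (HC := C_bounds).
  exists (fun z => / C * psi z). split; [|split; [|split; [|split]]].
  - intros z. apply (@continuous_mult R_UniformSpace R_AbsRing (fun _ => / C) psi).
    apply continuous_const. apply psi_cont.
  - intros z _. assert (H := psi_01 z). split.
    apply Rmult_le_pos; [apply Rlt_le, Rinv_0_lt_compat; lra | lra].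
    apply Rle_trans with (/ C * 1). apply Rmult_le_compat_l. apply Rlt_le, Rinv_0_lt_compat; lra. lra.
    rewrite Rmult_1_r. rewrite <- Rinv_1. apply Rinv_le_contravar; lra.
  - rewrite RInt_scal_R by apply psi_ex. fold C. apply Rinv_l. lra.
  - intros z Hz. rewrite psi_1 by auto. rewrite Rmult_1_r.
    replace (1/2) with (/ 2) by field. apply Rinv_le_contravar; lra.
  - intros z. rewrite phi_deriv. unfold Rdiv. ring.
Qed.

End K.
Definition Hf (g : R -> R) (l : R) := RInt (fun z => g z / (1 + l - z)) (-1) 1.

Lemma cont_div (g : R -> R) (Hc : forall z, continuous g z) c z :
  c - z <> 0 -> continuous (fun z => g z / (c - z)) z.
Proof.
  intros Hz.
  apply (@continuous_mult R_UniformSpace R_AbsRing g (fun z => / (c - z))). apply Hc.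
  apply (continuous_Rinv_comp (fun z => c - z)); auto.
  apply exd_cont. auto_derive. auto.
Qed.

Lemma exf (g : R -> R) (Hc : forall z, continuous g z) l a b :
  (forall z, Rmin a b <= z <= Rmax a b -> 1 + l - z <> 0) ->
  ex_RInt (fun z => g z / (1 + l - z)) a b.
Proof.
  intros H. apply exc. intros z Hz. apply cont_div; auto.
Qed.

Lemma exf1 (g : R -> R) (Hc : forall z, continuous g z) l :
  0 < l -> ex_RInt (fun z => g z / (1 + l - z)) (-1) 1.
Proof.
  intros Hl. apply exf; auto. intros z Hz.
  rewrite Rmin_left in Hz by lra. rewrite Rmax_right in Hz by lra. lra.
Qed.

Lemma Hdiff (g : R -> R) (Hc : forall z, continuous g z) l l' :
  0 < l -> 0 < l' ->
  Hf g l - Hf g l' = RInt (fun z => g z * ((l' - l) / ((1 + l - z) * (1 + l' - z)))) (-1) 1.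
Proof.
  intros Hl Hl'. unfold Hf.
  rewrite <- (RInt_minus (V := R_CompleteNormedModule)) by (apply exf1; auto).
  apply RInt_ext. intros z Hz.
  rewrite Rmin_left in Hz by lra. rewrite Rmax_right in Hz by lra.
  unfold minus, plus, opp; simpl. field. lra.
Qed.

Lemma exd (g : R -> R) (Hc : forall z, continuous g z) l l' :
  0 < l -> 0 < l' ->
  ex_RInt (fun z => g z * ((l' - l) / ((1 + l - z) * (1 + l' - z)))) (-1) 1.
Proof.
  intros Hl Hl'. apply exc. intros z Hz.
  rewrite Rmin_left in Hz by lra. rewrite Rmax_right in Hz by lra.
  apply (@continuous_mult R_UniformSpace R_AbsRing g). apply Hc.
  apply exd_cont. auto_derive. apply Rmult_integral_contrapositive; split; lra.
Qed.



Lemma Hdecr (g : R -> R) (Hc : forall z, continuous g z)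
  (Hb : forall z, -1 <= z <= 1 -> 0 <= g z <= 1) (Hi : RInt g (-1) 1 = 1) l l' :
  0 < l -> l < l' -> Hf g l' < Hf g l.
Proof.
  intros Hl Hll.
  assert (Hd := Hdiff g Hc l l' Hl ltac:(lra)).
  set (c := (l' - l) / ((2 + l) * (2 + l'))).
  assert (Hcp : 0 < c) by (unfold c; apply Rdiv_lt_0_compat; nra).
  assert (c <= Hf g l - Hf g l'); [|lra].
  rewrite Hd.
  replace c with (RInt (fun z => c * g z) (-1) 1).
  2:{ rewrite RInt_scal_R. rewrite Hi. apply Rmult_1_r. apply exc. intros; auto. }
  apply RInt_le. lra.
  apply exc. intros z _. apply (@continuous_mult R_UniformSpace R_AbsRing (fun _ => c) g).
  apply continuous_const. apply Hc.
  apply exd; auto; lra.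
  intros z Hz. destruct (Hb z ltac:(lra)) as [Hg0 Hg1].
  rewrite Rmult_comm. apply Rmult_le_compat_l; auto.
  unfold c. unfold Rdiv. apply Rmult_le_compat_l. lra.
  apply Rinv_le_contravar. apply Rmult_lt_0_compat; lra.
  apply Rmult_le_compat; lra.
Qed.

Lemma Hlip (g : R -> R) (Hc : forall z, continuous g z)
  (Hb : forall z, -1 <= z <= 1 -> 0 <= g z <= 1) l l' :
  0 < l -> 0 < l' -> Rabs (Hf g l - Hf g l') <= 2 * (Rabs (l' - l) / (l * l')).
Proof.
  intros Hl Hl'. rewrite Hdiff by auto.
  eapply Rle_trans. apply abs_RInt_le. lra. apply exd; auto.
  assert (E : @eq R (RInt (fun _ => Rabs (l' - l) / (l * l')) (-1) 1) (2 * (Rabs (l' - l) / (l * l'))))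
    by (rewrite RInt_cst; ring).
  rewrite <- E.
  apply RInt_le. lra.
  apply exc. intros z Hz. 
  rewrite Rmin_left in Hz by lra. rewrite Rmax_right in Hz by lra.
  apply (continuous_Rabs_comp (fun z => g z * ((l' - l) / ((1 + l - z) * (1 + l' - z))))).
  apply (@continuous_mult R_UniformSpace R_AbsRing g). apply Hc.
  apply exd_cont; auto_derive. apply Rmult_integral_contrapositive; split; lra.
  apply exc. intros; apply continuous_const.
  intros z Hz. destruct (Hb z ltac:(lra)) as [Hg0 Hg1].
  rewrite Rabs_mult, Rabs_pos_eq by lra.
  unfold Rdiv. rewrite Rabs_mult. rewrite Rabs_inv. 
  rewrite (Rabs_pos_eq ((1 + l - z) * (1 + l' - z))) by nra.
  rewrite <- (Rmult_1_l (Rabs (l' - l) * / (l * l'))).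
  apply Rmult_le_compat; auto. apply Rmult_le_pos; [apply Rabs_pos|]. apply Rlt_le, Rinv_0_lt_compat; nra.
  apply Rmult_le_compat_l. apply Rabs_pos.
  apply Rinv_le_contravar. nra. apply Rmult_le_compat; lra.
Qed.

Lemma Hcont (g : R -> R) (Hc : forall z, continuous g z)
  (Hb : forall z, -1 <= z <= 1 -> 0 <= g z <= 1) l :
  0 < l -> continuity_pt (Hf g) l.
Proof.
  intros Hl eps Heps.
  exists (Rmin (l/2) (eps * l * l / 8)). split.
  apply Rmin_pos. lra. apply Rmult_lt_0_compat; [|lra]. apply Rmult_lt_0_compat; [|lra]. nra.
  intros x [_ Hx]. simpl in Hx. unfold Rfunctions.R_dist in Hx |- *.
  assert (H1 := Rmin_l (l/2) (eps * l * l / 8)).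
  assert (H2 := Rmin_r (l/2) (eps * l * l / 8)).
  assert (Hxp : l / 2 < x).
  { apply Rabs_def2 in Hx. lra. }
  eapply Rle_lt_trans. apply (Hlip g Hc Hb x l); lra.
  rewrite Rabs_minus_sym.
  apply Rle_lt_trans with (2 * (Rabs (x - l) / (l * (l/2)))).
  apply Rmult_le_compat_l. lra. unfold Rdiv. apply Rmult_le_compat_l. apply Rabs_pos.
  apply Rinv_le_contravar; nra.
  assert (Rabs (x - l) < eps * l * l / 8) by lra.
  apply Rmult_lt_reg_r with (l * (l / 2)). nra.
  unfold Rdiv at 1. rewrite Rmult_assoc, Rmult_assoc, Rinv_l by nra. nra.
Qed.

Lemma H1le (g : R -> R) (Hc : forall z, continuous g z)
  (Hb : forall z, -1 <= z <= 1 -> 0 <= g z <= 1) (Hi : RInt g (-1) 1 = 1) :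
  Hf g 1 <= 1.
Proof.
  unfold Hf. apply Rle_trans with (RInt g (-1) 1); [|lra]. apply RInt_le. lra. apply exf1; auto; lra.
  apply exc; intros; auto.
  intros z Hz. destruct (Hb z ltac:(lra)).
  unfold Rdiv. rewrite <- (Rmult_1_r (g z)) at 2. apply Rmult_le_compat_l; auto.
  rewrite <- Rinv_1. apply Rinv_le_contravar; lra.
Qed.

Lemma RInt_log (a c d : R) : c <= d -> d < 1 + a ->
  @eq R (RInt (fun z => 1 / (1 + a - z)) c d) (ln (1 + a - c) - ln (1 + a - d)).
Proof.
  intros Hcd Hd.
  assert (H := @is_RInt_derive R_CompleteNormedModule (fun z => - ln (1 + a - z)) (fun z => 1 / (1 + a - z)) c d).
  apply is_RInt_unique in H.
  rewrite H. unfold minus, plus, opp; simpl. ring.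
  intros x Hx. rewrite Rmin_left in Hx by lra. rewrite Rmax_right in Hx by lra.
  auto_derive. lra. field. lra.
  intros x Hx. rewrite Rmin_left in Hx by lra. rewrite Rmax_right in Hx by lra.
  apply exd_cont. auto_derive. lra.
Qed.


Lemma Hlow (g : R -> R) (Hc : forall z, continuous g z)
  (Hb : forall z, -1 <= z <= 1 -> 0 <= g z <= 1) k a
  (Hlo : forall z, -1 + 2 * k <= z <= 1 - 2 * k -> 1/2 <= g z) :
  0 <= k <= 1/4 -> 0 < a ->
  / 2 * (ln (2 + a - 2 * k) - ln (a + 2 * k)) <= Hf g a.
Proof.
  intros Hk Ha.
  assert (EX : forall c d, -1 <= c -> c <= d -> d <= 1 -> ex_RInt (fun z => g z / (1 + a - z)) c d).
  { intros c d H1 H2 H3. apply exf; auto. intros z Hz.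
    rewrite Rmin_left in Hz by lra. rewrite Rmax_right in Hz by lra. lra. }
  unfold Hf.
  rewrite (chasles_R _ (-1) (-1 + 2 * k) 1) by (apply EX; lra).
  rewrite (chasles_R _ (-1 + 2 * k) (1 - 2 * k) 1) by (apply EX; lra).
  assert (P1 : 0 <= RInt (fun z => g z / (1 + a - z)) (-1) (-1 + 2 * k)).
  { apply RInt_ge_0. lra. apply EX; lra. intros z Hz. destruct (Hb z ltac:(lra)).
    apply Rdiv_le_0_compat; lra. }
  assert (P2 : 0 <= RInt (fun z => g z / (1 + a - z)) (1 - 2 * k) 1).
  { apply RInt_ge_0. lra. apply EX; lra. intros z Hz. destruct (Hb z ltac:(lra)).
    apply Rdiv_le_0_compat; lra. }
  assert (P3 : / 2 * (ln (2 + a - 2 * k) - ln (a + 2 * k)) <=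
     RInt (fun z => g z / (1 + a - z)) (-1 + 2 * k) (1 - 2 * k)); [|lra].
  replace (ln (2 + a - 2 * k) - ln (a + 2 * k)) with
    (ln (1 + a - (-1 + 2 * k)) - ln (1 + a - (1 - 2 * k))) by (f_equal; f_equal; ring).
  rewrite <- RInt_log by lra.
  rewrite <- RInt_scal_R.
  apply RInt_le. lra.
  apply exc. intros z Hz. rewrite Rmin_left in Hz by lra. rewrite Rmax_right in Hz by lra.
  apply exd_cont. auto_derive. lra.
  apply EX; lra.
  intros z Hz. specialize (Hlo z ltac:(lra)).
  unfold Rdiv. rewrite Rmult_1_l. apply Rmult_le_compat_r.
  apply Rlt_le, Rinv_0_lt_compat; lra. lra.
  apply exc. intros z Hz. rewrite Rmin_left in Hz by lra. rewrite Rmax_right in Hz by lra.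
  apply exd_cont. auto_derive. lra.
Qed.

Lemma main_abs (M : R) (HM : 1 < M) (k : R) (Hk : 0 <= k <= / (4 * exp (4 * M)))
  (m : nat) (Hm : (1 <= m)%nat) (HmM : INR m < M)
  (g : R -> R) (Hc : forall z, continuous g z)
  (Hb : forall z, -1 <= z <= 1 -> 0 <= g z <= 1) (Hi : RInt g (-1) 1 = 1)
  (Hlo : forall z, -1 + 2 * k <= z <= 1 - 2 * k -> 1/2 <= g z) :
  exists l1, 0 < l1 /\ Hf g l1 = 2 * INR m /\
    (forall l, 0 < l -> Hf g l = 2 * INR m -> l = l1) /\ / (4 * exp (4 * M)) <= l1.
Proof.
  set (E := exp (4 * M)) in *.
  assert (HE : 1 < E). { unfold E. rewrite <- exp_0. apply exp_increasing. lra. }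
  set (a := / (4 * E)) in *.
  assert (Ha0 : 0 < a) by (unfold a; apply Rinv_0_lt_compat; lra).
  assert (Ha4 : a < 1/4).
  { unfold a. replace (1/4) with (/ 4) by field. apply Rinv_lt_contravar; lra. }
  assert (HaE : 4 * a = / E) by (unfold a; field; lra).
  assert (Hm1 : 1 <= INR m) by (replace 1 with (INR 1) by reflexivity; apply le_INR; auto).
  assert (HHa : 2 * M < Hf g a).
  { eapply Rlt_le_trans; [|apply (Hlow g Hc Hb k a Hlo); lra].
    assert (L1 : 0 < ln (2 + a - 2 * k)). { rewrite <- ln_1. apply ln_increasing; lra. }
    assert (L2 : ln (a + 2 * k) < - (4 * M)).
    { replace (- (4 * M)) with (ln (/ E)).
      apply ln_increasing; lra.
      rewrite ln_Rinv by lra. unfold E. rewrite ln_exp. ring. }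
    lra. }
  assert (HH1 := H1le g Hc Hb Hi).
  set (f := fun l => 2 * INR m - Hf g l).
  destruct (Ranalysis5.IVT_interv f a 1) as [z [Hz Hfz]].
  { intros x Hx. apply continuity_pt_minus. apply continuity_pt_const. intros u v; reflexivity.
    apply Hcont; auto; lra. }
  lra. unfold f; lra. unfold f; lra.
  unfold f in Hfz.
  assert (Uniq : forall l, 0 < l -> Hf g l = 2 * INR m -> l = z).
  { intros l Hl Hfl. destruct (Rtotal_order l z) as [H|[H|H]]; auto.
    - assert (Hf g z < Hf g l) by (apply Hdecr; auto). lra.
    - assert (Hf g l < Hf g z) by (apply Hdecr; auto; lra). lra. }
  exists z. split; [lra|]. split; [lra|]. split; [exact Uniq|].
  destruct (Rlt_le_dec z a) as [H|H]; auto.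
  assert (Hf g a < Hf g z) by (apply Hdecr; auto; lra). lra.
Qed.

Lemma g_exists (Theta : R -> R)
  (Hsmooth : forall (n : nat) (x : R), ex_derive_n Theta n x)
  (Hpos : forall z, -1 < z < 1 -> 0 < Theta z)
  (Hsupp : forall z, Theta z <> 0 -> -1 < z < 1)
  (Hint : RInt Theta (-1) 1 = 1) k :
  0 <= k <= 1/4 ->
  exists g : R -> R, (forall z, continuous g z) /\
  (forall z, -1 <= z <= 1 -> 0 <= g z <= 1) /\ RInt g (-1) 1 = 1 /\
  (forall z, -1 + 2 * k <= z <= 1 - 2 * k -> 1/2 <= g z) /\
  (forall z, - Derive (phi_k Theta k) z = g z).
Proof.
  intros Hk. destruct (Req_dec k 0) as [H0|H0].
  - subst k. exists (fun _ => 1/2). split; [|split; [|split; [|split]]].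
    + intros; apply continuous_const.
    + intros; lra.
    + rewrite RInt_cst. lra.
    + intros; lra.
    + intros z. assert (Hphi : phi_k Theta 0 = fun z => (1 - z) / 2).
      { apply functional_extensionality. intros x. unfold phi_k.
        destruct (Req_EM_T 0 0). reflexivity. lra. }
      rewrite Hphi. rewrite (is_derive_unique _ z (- (1/2))). lra.
      auto_derive; auto. field.
  - apply g_pos; auto. lra.
Qed.

Lemma lam_iff (Theta : R -> R) k (m : nat) (g : R -> R) l :
  (1 <= m)%nat -> (forall z, - Derive (phi_k Theta k) z = g z) ->
  (lambda_eq Theta k m l <-> Hf g l = 2 * INR m).
Proof.
  intros Hm Hd.
  assert (Hm1 : 1 <= INR m) by (replace 1 with (INR 1) by reflexivity; apply le_INR; auto).
  unfold lambda_eq, Hf.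
  rewrite (RInt_ext _ (fun z => g z / (1 + l - z))).
  2:{ intros z _. rewrite <- Hd. unfold Rdiv. first [reflexivity | apply Ropp_mult_distr_l | symmetry; apply Ropp_mult_distr_l]. }
  split; intros H.
  - apply (Rmult_eq_compat_l (2 * INR m)) in H.
    rewrite <- Rmult_assoc, Rinv_r, Rmult_1_l in H by lra. lra.
  - rewrite H. field. lra.
Qed.

Theorem lemma5p9 (Theta : R -> R)
  (Hsmooth : forall (n : nat) (x : R), ex_derive_n Theta n x)
  (Hpos : forall z, -1 < z < 1 -> 0 < Theta z)
  (Hsupp : forall z, Theta z <> 0 -> -1 < z < 1)
  (Hint : RInt Theta (-1) 1 = 1)
  (M : R) (HM : 1 < M) :
  exists kappa0 : R, 0 < kappa0 /\
  exists lstar : R, 0 < lstar /\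
  forall kappa : R, 0 <= kappa <= kappa0 ->
  forall m : nat, (1 <= m)%nat -> INR m < M ->
  exists l1 : R, 0 < l1 /\ lambda_eq Theta kappa m l1 /\
    (forall l : R, 0 < l -> lambda_eq Theta kappa m l -> l = l1) /\
    lstar <= l1.
Proof.
  assert (HE : 1 < exp (4 * M)). { rewrite <- exp_0. apply exp_increasing. lra. }
  assert (Ha0 : 0 < / (4 * exp (4 * M))) by (apply Rinv_0_lt_compat; lra).
  assert (Ha4 : / (4 * exp (4 * M)) < 1/4).
  { replace (1/4) with (/ 4) by field. apply Rinv_lt_contravar; lra. }
  exists (/ (4 * exp (4 * M))). split; auto.
  exists (/ (4 * exp (4 * M))). split; auto.
  intros kappa Hk m Hm HmM.
  destruct (g_exists Theta Hsmooth Hpos Hsupp Hint kappa ltac:(lra))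
    as [g [Hc [Hb [Hi [Hlo Hd]]]]].
  destruct (main_abs M HM kappa Hk m Hm HmM g Hc Hb Hi Hlo) as [l1 [Hl1 [He [Hu Hs]]]].
  exists l1. split; auto. split.
  apply (lam_iff Theta kappa m g l1 Hm Hd); auto.
  split; auto.
  intros l Hl Heq. apply Hu; auto. apply (lam_iff Theta kappa m g l Hm Hd); auto.
Qed.
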